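(* Let $H$ be a complete $3$-graph whose edges (triples) are coloured red and blue, and let $d_r,d_b$ be positive integers such that $H$ has at least $d_r+d_b+1$ vertices. Fix a vertex $u$ of $H$. For each other vertex $v$, call the pair $uv$ red if $uv$ is contained in fewer than $d_r$ red triples, and blue if $uv$ is contained in fewer than $d_b$ blue triples. Then $u$ is in at most $2d_b$ red pairs, or $u$ is in at most $2d_r$ blue pairs.
   Context: A $3$-graph is a $3$-uniform hypergraph; the complete $3$-graph contains all triples of its vertex set. *)

(* Defs.v *)
From mathcomp Require Import all_boot.
Set Implicit Arguments. Unset Strict Implicit. Unset Printing Implicit Defensive.

(* A red/blue colouring of the complete 3-graph on a finite vertex type T is a
   function col : {set T} -> bool, only evaluated on 3-element sets;
   col e = true means the triple e is red, false means blue. *)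

Definition pair_deg (T : finType) (col : {set T} -> bool) (b : bool) (u v : T) : nat :=
  #|[set w : T | (w != u) && (w != v) && (col [set u; v; w] == b)]|.

Definition red_pair (T : finType) (col : {set T} -> bool) (dr : nat) (u v : T) : bool :=
  (v != u) && (pair_deg col true u v < dr).

Definition blue_pair (T : finType) (col : {set T} -> bool) (db : nat) (u v : T) : bool :=
  (v != u) && (pair_deg col false u v < db).

(* Main.v *)
Require Import Defs.
From mathcomp Require Import all_boot.
From mathcomp Require Import zify.

Lemma sum_col (T : finType) (B : {set T}) (P : T -> bool) (D : {set T}) :
  (forall w, w \in B -> P w -> w \in D) ->
  \sum_(w in B) (P w : nat) <= #|D|.
Proof.
move=> H.
have -> : \sum_(w in B) (P w : nat) = \sum_(w in [set w in B | P w]) 1.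
  rewrite big_mkcond [RHS]big_mkcond /=; apply: eq_bigr => w _.
  by rewrite inE; case: (w \in B); case: (P w).
rewrite sum1_card; apply: subset_leq_card; apply/subsetP => w.
by rewrite inE => /andP[]; apply: H.
Qed.

Theorem lemma2p2 (T : finType) (col : {set T} -> bool) (dr db : nat)
  (hdr : 0 < dr) (hdb : 0 < db) (hT : dr + db + 1 <= #|T|) (u : T) :
  #|[set v : T | red_pair col dr u v]| <= 2 * db \/
  #|[set v : T | blue_pair col db u v]| <= 2 * dr.
Proof.
set R := [set v | _]; set B := [set v | _].
have tot : forall v, v != u ->
    pair_deg col true u v + pair_deg col false u v = #|T| - 2.
  move=> v vu.
  rewrite /pair_deg -cardsUI.
  have -> : [set w | (w != u) && (w != v) && (col [set u; v; w] == true)]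
     :&: [set w | (w != u) && (w != v) && (col [set u; v; w] == false)] = set0.
    apply/setP => w; rewrite !inE; by case: (col _); rewrite ?andbF.
  rewrite cards0 addn0.
  have -> : [set w | (w != u) && (w != v) && (col [set u; v; w] == true)]
     :|: [set w | (w != u) && (w != v) && (col [set u; v; w] == false)] =
     ~: [set u; v].
    apply/setP => w; rewrite !inE negb_or; case: (col _); rewrite /= ?andbT ?andbF ?orbF //.
  have := cardsC [set u; v]; rewrite cards2 eq_sym (negbTE vu) /=; lia.
have disj : forall v, v \in R -> v \in B -> False.
  move=> v; rewrite !inE /red_pair /blue_pair => /andP[vu h1] /andP[_ h2].
  have := tot v vu; lia.
have kR : forall v, v \in R -> \sum_(w in B) (col [set u; v; w] : nat) <= dr.-1.
  move=> v vR.
  have := vR; rewrite inE /red_pair => /andP[vu h].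
  apply: leq_trans (_ : pair_deg col true u v <= _); last by lia.
  apply: sum_col => w wB cw; rewrite inE cw eqxx andbT.
  apply/andP; split.
    by move: wB; rewrite inE /blue_pair => /andP[].
  by apply/eqP => E; subst w; exact: disj vR wB.
have kB : forall w, w \in B -> \sum_(v in R) (~~ col [set u; v; w] : nat) <= db.-1.
  move=> w wB.
  have := wB; rewrite inE /blue_pair => /andP[wu h].
  apply: leq_trans (_ : pair_deg col false u w <= _); last by lia.
  apply: sum_col => v vR cv; rewrite inE.
  have -> : [set u; w; v] = [set u; v; w] by rewrite -!setUA (setUC [set w]).
  rewrite (negbTE cv) eqxx andbT.
  apply/andP; split.
    by move: vR; rewrite inE /red_pair => /andP[].
  by apply/eqP => E; subst w; exact: disj vR wB.
have main : #|R| * #|B| <= #|R| * dr.-1 + #|B| * db.-1.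
  have -> : #|R| * #|B| = \sum_(v in R) \sum_(w in B)
      ((col [set u; v; w] : nat) + (~~ col [set u; v; w] : nat)).
    rewrite -sum1_card big_distrl /=; apply: eq_bigr => v _.
    rewrite mul1n -sum1_card; apply: eq_bigr => w _; by case: (col _).
  under eq_bigr do rewrite big_split /=.
  rewrite big_split /=; apply: leq_add.
    rewrite -[in X in _ <= X]sum1_card big_distrl /=.
    by apply: leq_sum => v vR; rewrite mul1n; apply: kR.
  rewrite exchange_big /= -[in X in _ <= X]sum1_card big_distrl /=.
  by apply: leq_sum => w wB; rewrite mul1n; apply: kB.
have hR : 0 < #|R| \/ True by right.
nia.
Qed.
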